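(* Let $T$ be a finite tree rooted at a fixed non-leaf vertex $r$ and let $k\geq 1$. Define the graphs $I'$ and $I_0,\ldots,I_{k-1}$ on vertex set $V(T)$ as follows: distinct $u,v$ are adjacent in $I'$ iff $f'(u)\cap f'(v)\neq\emptyset$, where $f'(u)=[d_T(r,u),d_T(r,u)+k]$; and distinct $u,v$ are adjacent in $I_i$ iff $f_i(u)\cap f_i(v)\neq\emptyset$, where $f_i(u)=[s(p^i(u)),\,t(p^{k-1-i}(u))]$. If $u,v$ are distinct vertices with $(u,v)\notin E(T^k)$, then either $(u,v)\notin E(I')$ or there exists $i\in\{0,\ldots,k-1\}$ with $(u,v)\notin E(I_i)$.
   Context: $d_T$ is the distance in $T$, and $T^k$ is the graph on $V(T)$ in which distinct $u,v$ are adjacent iff $d_T(u,v)\leq k$. For vertices $u,v$, $u\preceq v$ ($u$ is an ancestor of $v$) means that $u$ lies on the unique path in $T$ from $r$ to $v$. For $u\neq r$, $p(u)$ is the neighbour of $u$ on the path from $u$ to $r$, and $p(r)=r$; $p^0(u)=u$, $p^i(u)=p(p^{i-1}(u))$ for $i\geq1$. Let $l_1,\ldots,l_m$ be the leaves (degree-1 vertices) of $T$ in the order in which they appear in some depth-first traversal of $T$ starting from $r$; for a vertex $u$, $L(u)=\{i: u\preceq l_i\}$, $s(u)=\min L(u)$, $t(u)=\max L(u)$. *)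

(* Defs.v *)
From mathcomp Require Import all_boot.
Set Implicit Arguments. Unset Strict Implicit. Unset Printing Implicit Defensive.

Section TreeDefs.
Variables (V : finType) (e : rel V).

Definition is_tree : Prop :=
  symmetric e /\ irreflexive e /\ (forall u v, connect e u v) /\
  ~ (exists c : seq V, [/\ 3 <= size c, uniq c & cycle e c]).

(* Graph distance d_T(u,v): length of a shortest walk from u to v
   (shortest walks in a connected graph have length < #|V|). *)
Definition dist (u v : V) : nat :=
  find (fun n => [exists p : n.-tuple V, path e u p && (last u p == v)])
       (iota 0 #|V|).

Definition onpath (u v w : V) : bool :=
  [exists n : 'I_#|V|, exists p : n.-tuple V,
     [&& path e u p, last u p == v, uniq (u :: p) & w \in u :: p]].

Definition deg (u : V) : nat := #|[set w | e u w]|.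
Definition leaf (u : V) : bool := deg u == 1.

Variable r : V.

Definition anc (u v : V) : bool := onpath r v u.

Definition par (u : V) : V :=
  if u == r then r else odflt u [pick w | e u w && onpath u r w].

Definition pit (i : nat) (u : V) : V := iter i par u.

(* A depth-first traversal from r, in preorder: an enumeration of all
   vertices starting at r in which, for every vertex u, the descendants
   of u form a contiguous block beginning with u. *)
Definition is_dfs (s : seq V) : Prop :=
  [/\ uniq s, forall x, x \in s, head r s = r, 0 < size s &
      forall u, infix [seq x <- s | anc u x] s /\
                head u [seq x <- s | anc u x] = u].

Variable s : seq V.

(* leaves l_0, ..., l_{m-1} in the order of the traversal (0-based) *)
Definition leaves : seq V := [seq x <- s | leaf x].

Definition Lset (u : V) : seq nat :=
  [seq i <- iota 0 (size leaves) | anc u (nth r leaves i)].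

Definition sL (u : V) : nat := head 0 (Lset u).
Definition tL (u : V) : nat := last 0 (Lset u).

Definition meets (a b c d : nat) : Prop :=
  exists x : nat, a <= x <= b /\ c <= x <= d.

Variable k : nat.

Definition adjI' (u v : V) : Prop :=
  u != v /\ meets (dist r u) (dist r u + k) (dist r v) (dist r v + k).

Definition adjI (i : nat) (u v : V) : Prop :=
  u != v /\ meets (sL (pit i u)) (tL (pit (k - 1 - i) u))
                  (sL (pit i v)) (tL (pit (k - 1 - i) v)).

Definition adjTk (u v : V) : Prop := u != v /\ dist u v <= k.

End TreeDefs.

(* Main.v *)
Require Import Defs.
From mathcomp Require Import all_boot.
From mathcomp Require Import zify.
Set Implicit Arguments. Unset Strict Implicit. Unset Printing Implicit Defensive.

Section Walks.
Variables (V : finType) (e : rel V).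
Hypothesis esym : symmetric e.
Hypothesis eirr : irreflexive e.
Hypothesis econn : forall u v, connect e u v.

Lemma uniq_size_lt x (p : seq V) : uniq (x :: p) -> size p < #|V|.
Proof.
move=> U; have := max_card (mem (x :: p)).
by move: U => /card_uniqP ->.
Qed.

Lemma walk_dist x y (p : seq V) : path e x p -> last x p = y -> dist e x y <= size p.
Proof.
move=> P L; case: (shortenP P) L => p' P' U' S' L'.
have sz : size p' <= size p.
  by apply: uniq_leq_size => //; case/andP: U'.
apply: leq_trans sz; rewrite /dist.
have lt := uniq_size_lt U'.
rewrite leqNgt; apply/negP => /(before_find 0).
rewrite nth_iota // add0n => /existsP; apply.
by exists (in_tuple p'); rewrite /= P' L' eqxx.
Qed.

Lemma dist_walk x y : exists p : seq V, [/\ path e x p, last x p = y & size p = dist e x y].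
Proof.
have /connectP [p P L] := econn x y.
case: (shortenP P) L => p' P' U' S' L'.
have lt := uniq_size_lt U'.
pose a : pred nat := fun n => [exists p0 : n.-tuple V, path e x p0 && (last x p0 == y)].
have H : has a (iota 0 #|V|).
  apply/hasP; exists (size p'); first by rewrite mem_iota.
  by apply/existsP; exists (in_tuple p'); rewrite /= P' L' eqxx.
have := nth_find 0 H; rewrite -/(dist e x y).
have ltf : dist e x y < #|V| by move: H; rewrite has_find size_iota.
rewrite nth_iota // add0n => /existsP [q /andP [Pq /eqP Lq]].
by exists q; rewrite size_tuple.
Qed.

Lemma dist_refl x : dist e x x = 0.
Proof. by apply/eqP; rewrite -leqn0; apply: (walk_dist (p:=[::])). Qed.

Lemma rev_walk x (p : seq V) : path e x p ->
  path e (last x p) (rev (belast x p)) /\ last (last x p) (rev (belast x p)) = x.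
Proof.
move=> P; split.
  rewrite rev_path; rewrite (eq_path (e' := e)) // => a b; exact: esym.
case: p P => //= a p _.
by rewrite rev_cons last_rcons.
Qed.

Lemma dist_sym x y : dist e x y = dist e y x.
Proof.
suff H : forall x y, dist e x y <= dist e y x.
  by apply/eqP; rewrite eqn_leq !H.
move=> {}x {}y; have [p [P L S]] := dist_walk y x.
have [P' L'] := rev_walk P; rewrite L in P' L'.
by rewrite -S; have := walk_dist P' L'; rewrite size_rev size_belast.
Qed.

Lemma dist_tri x y z : dist e x z <= dist e x y + dist e y z.
Proof.
have [p [P L S]] := dist_walk x y.
have [q [Q M T]] := dist_walk y z.
rewrite -S -T -size_cat; apply: walk_dist.
  by rewrite cat_path P L Q.
by rewrite last_cat L.
Qed.

Lemma dist_edge x y : e x y -> dist e x y <= 1.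
Proof. by move=> E; apply: (walk_dist (p := [:: y])) => //=; rewrite E. Qed.

End Walks.

Section Uniq.
Variables (V : finType) (e : rel V).
Hypothesis esym : symmetric e.
Hypothesis acyc : ~ (exists c : seq V, [/\ 3 <= size c, uniq c & cycle e c]).

Lemma no_fork x (P Q : seq V) y : P != [::] -> Q != [::] -> head x P != head x Q ->
  path e x P -> uniq (x :: P) -> last x P = y ->
  path e x Q -> uniq (x :: Q) -> last x Q = y -> False.
Proof.
move=> nP nQ hPQ pP uP lP pQ uQ lQ.
have yP : y \in P by case: P nP lP {hPQ pP uP} => // a P _ <- /=; exact: mem_last.
have yQ : y \in Q by case: Q nQ lQ {hPQ pQ uQ} => // a Q _ <- /=; exact: mem_last.
have hasPQ : has (mem Q) P by apply/hasP; exists y.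
set i := find (mem Q) P.
have iP : i < size P by rewrite -has_find.
set z := nth x P i.
have zQ : z \in Q by exact: (nth_find x hasPQ).
set j := index z Q.
have jQ : j < size Q by rewrite index_mem.
have eP : P = take i P ++ z :: drop i.+1 P by rewrite -drop_nth // cat_take_drop.
have eQ : Q = take j Q ++ z :: drop j.+1 Q by rewrite -[X in _ ++ X :: _](nth_index x zQ) /j -drop_nth // cat_take_drop.
set p1 := take i P in eP *; set q1 := take j Q in eQ *.
set P2 := drop i.+1 P in eP; set Q2 := drop j.+1 Q in eQ.
have np1 : ~~ has (mem Q) p1 by rewrite /p1 has_take // ltnn.
have sp1 : size p1 = i by rewrite /p1 size_takel // ltnW.
have sq1 : size q1 = j by rewrite /q1 size_takel // ltnW.
apply: acyc; exists (x :: p1 ++ z :: rev q1); split.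
- rewrite /= size_cat /= size_rev sp1 sq1 !ltnS addnS ltnS lt0n.
  apply/negP => /eqP/eqP; rewrite addn_eq0 => /andP [/eqP i0 /eqP j0].
  have h1 : z = head x P by rewrite /z i0 nth0.
  have h2 : z = head x Q by rewrite -(nth_index x zQ) -/j j0 nth0.
  by move: hPQ; rewrite -h1 -h2 eqxx.
- move: uP uQ; rewrite {1}eP {1}eQ /= !mem_cat !cat_uniq /= !inE !mem_rev rev_uniq.
  move=> /andP [/norP [xp1 /norP [xz xP2]] /and3P [up1 /norP [zp1 _] /andP [_ _]]].
  move=> /andP [/norP [xq1 _] /and3P [uq1 /norP [zq1 _] /andP [_ _]]].
  rewrite (negbTE xp1) (negbTE xz) (negbTE xq1) up1 (negbTE zp1) zq1 uq1 /= andbT.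
  apply/hasPn => w; rewrite mem_rev => wq1.
  apply/negP => wp1; move/hasPn: np1 => /(_ w wp1); rewrite /= eQ mem_cat wq1.
  by [].
- rewrite /= rcons_cat /= cat_path.
  move: pP; rewrite {1}eP cat_path /= => /and3P [-> -> _] /=.
  move: pQ; rewrite {1}eQ cat_path /= => /and3P [Pq1 Eq1 _].
  have pQ1 : path e x (rcons q1 z) by rewrite rcons_path Pq1.
  have [R _] := rev_walk esym pQ1.
  by move: R; rewrite last_rcons belast_rcons rev_cons.
Qed.

Lemma spath_uniq x (p q : seq V) y :
  path e x p -> uniq (x :: p) -> last x p = y ->
  path e x q -> uniq (x :: q) -> last x q = y -> p = q.
Proof.
elim: p x q => [|a p IH] x q.
  move=> _ _ /= Ly; subst y; case: q => // b q _ U /= L; exfalso.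
  by move: U; rewrite -L /= => /andP [/negP []]; exact: mem_last.
case: q => [|b q].
  move=> _ U /= L _ _ /= Ly; rewrite -Ly in L; exfalso.
  by move: U; rewrite -L /= => /andP [/negP []]; exact: mem_last.
move=> pP uP lP pQ uQ lQ.
case: (a =P b) => [ab|nab].
  subst b; congr (_ :: _).
  move: pP uP lP pQ uQ lQ => /= /andP [_ pP] /andP [_ uP] lP /andP [_ pQ] /andP [_ uQ] lQ.
  exact: (IH a q pP uP lP pQ uQ lQ).
exfalso; apply: (no_fork (x:=x) (P := a :: p) (Q := b :: q)) pP uP lP pQ uQ lQ => //.
by apply/eqP.
Qed.

End Uniq.

Lemma index_filter_lt (T : eqType) (P : pred T) (s : seq T) x y :
  uniq s -> P x -> P y -> x \in s -> y \in s -> index x s < index y s ->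
  index x (filter P s) < index y (filter P s).
Proof.
elim: s => //= h t IH /andP [nh U] Px Py.
rewrite !inE.
case: (x =P h) => [xh | hx]; case: (y =P h) => [yh | hy] /=.
- by rewrite xh yh ltnn.
- subst x; rewrite Px /= eqxx /=.
  by case: (h == y).
- by rewrite yh eqxx ltn0 => _ _.
- have -> : (h == x) = false by apply/eqP => hx'; case: hx.
  have -> : (h == y) = false by apply/eqP => hy'; case: hy.
  move=> xt yt; rewrite !ltnS => lt.
  have := IH U Px Py xt yt lt.
  case: (P h) => //=.
  have -> : (h == x) = false by apply/eqP => hx'; case: hx.
  have -> : (h == y) = false by apply/eqP => hy'; case: hy.
  by [].
Qed.

Section Rooted.
Variables (V : finType) (e : rel V) (r : V).
Hypothesis esym : symmetric e.
Hypothesis eirr : irreflexive e.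
Hypothesis econn : forall u v, connect e u v.
Hypothesis acyc : ~ (exists c : seq V, [/\ 3 <= size c, uniq c & cycle e c]).

Definition sp x (p : seq V) y := [&& path e x p, uniq (x :: p) & last x p == y].

Notation D := (dist e r).
Notation par := (par e r).
Notation pit := (pit e r).

Lemma revE x (p : seq V) : last x p :: rev (belast x p) = rev (x :: p).
Proof. by rewrite [in RHS]lastI rev_rcons. Qed.

Lemma sp_rev x p y : sp x p y -> sp y (rev (belast x p)) x.
Proof.
case/and3P => P U /eqP L; have [P' L'] := rev_walk esym P.
by rewrite /sp -L P' L' eqxx revE rev_uniq U.
Qed.

Lemma sp_uniq x p q y : sp x p y -> sp x q y -> p = q.
Proof.
by case/and3P => P U /eqP L /and3P [Q W /eqP M]; apply: (spath_uniq esym acyc P U L Q W M).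
Qed.

Lemma sp_exists x y : exists p, sp x p y.
Proof.
have /connectP [p P L] := econn x y.
case: (shortenP P) L => p' P' U' _ L'.
by exists p'; rewrite /sp P' U' L' eqxx.
Qed.

Lemma sp_size x p y : sp x p y -> size p = dist e x y.
Proof.
move=> S; have [q [Q L Sz]] := dist_walk econn x y.
case: (shortenP Q) L => q' Q' U' S' L'.
have Sq : sp x q' y by rewrite /sp Q' U' L' eqxx.
rewrite (sp_uniq S Sq); apply/eqP; rewrite eqn_leq.
have h1 : size q' <= size q by apply: uniq_leq_size S'; case/andP: U'.
have h2 : dist e x y <= size q' by apply: walk_dist.
by rewrite h2 -Sz h1.
Qed.

Lemma sp_size_lt x p y : sp x p y -> size p < #|V|.
Proof. by case/and3P => _ U _; exact: uniq_size_lt U. Qed.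

Lemma sp_nil x y : sp x [::] y -> x = y.
Proof. by case/and3P => _ _ /eqP. Qed.

Lemma sp_cons x a p y : sp x (a :: p) y -> [/\ e x a, x != y & sp a p y].
Proof.
case/and3P => /= /andP [E P] /andP [nx U] /eqP L.
split => //; last by rewrite /sp P /= U L eqxx.
apply/eqP => xy; move: nx; rewrite xy -L; case/negP; exact: mem_last.
Qed.

Lemma sp_nbr_mem u w p w0 : sp u (w :: p) r -> e u w0 -> w0 \in u :: w :: p -> w0 = w.
Proof.
move=> S E0 M; have [E ur S'] := sp_cons S.
rewrite inE in M.
case/orP: M => [/eqP wu | ]; first by move: E0; rewrite wu eirr.
rewrite inE => /orP [/eqP -> // | M].
case/splitPr: M S S' => p1 p2 S S'.
have S2 : sp u (w0 :: p2) r.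
  move: S; rewrite /sp /= cat_path /= last_cat /= => /and3P [/and3P [_ _ /andP [_ P2]] U2 L2].
  rewrite E0 P2 L2 /= andbT.
  move: U2; rewrite !inE !mem_cat !cat_uniq /= !inE => /and3P [/norP [_ /norP [_ /norP [H0 H1]]] _ /and3P [_ _ /andP [H2 H3]]].
  by rewrite negb_or H0 H1 H2 H3.
have := sp_uniq S S2 => /(congr1 size) /=; rewrite size_cat /= => /eqP.
move=> /eqP H; exfalso; lia.
Qed.

Lemma sp_nbr u w p : sp u (w :: p) r -> par u = w.
Proof.
move=> S; have [E ur S'] := sp_cons S.
rewrite /Defs.par (negbTE ur); case: pickP => [w0 /andP [E0 O] | H] /=.
- case/existsP: O => n /existsP [q /and4P [Q /eqP L U M]].
  have Sq : sp u q r by rewrite /sp Q L U eqxx.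
  rewrite -(sp_uniq S Sq) in M.
  exact: sp_nbr_mem S E0 M.
- suff O : onpath e u r w by move: (H w); rewrite /= E O.
  have lt := sp_size_lt S.
  rewrite /onpath; apply/existsP; exists (Ordinal lt); apply/existsP; exists (in_tuple (w :: p)).
  case/and3P: S => -> -> -> /=; by rewrite !inE eqxx !orbT.
Qed.

Lemma nbr_par z w : e z w -> par w = z \/ par z = w.
Proof.
move=> E; have [p S] := sp_exists w r.
case: (boolP (z \in w :: p)) => M.
- left; case: p S M => [|a p] S M.
    by move: M; rewrite inE => /eqP zw; move: E; rewrite zw eirr.
  rewrite (sp_nbr S); symmetry; apply: (sp_nbr_mem S) => //.
  by rewrite esym.
- right; apply: (sp_nbr (p := p)).
  case/and3P: S => P U L; rewrite /sp /= E P /= L andbT.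
  by move: U M => /= -> ->.
Qed.

Lemma par_r : par r = r.
Proof. by rewrite /Defs.par eqxx. Qed.

Lemma pit_r j : pit j r = r.
Proof. by elim: j => //= j IH; rewrite /Defs.pit /= in IH *; rewrite IH par_r. Qed.

Lemma pitS j u : pit j.+1 u = pit j (par u).
Proof. by rewrite /Defs.pit iterSr. Qed.

Lemma pitD i j u : pit i (pit j u) = pit (i + j) u.
Proof. by rewrite /Defs.pit iterD. Qed.

Lemma mem_sp u p : sp u p r -> forall x, reflect (exists j, x = pit j u) (x \in u :: p).
Proof.
elim: p u => [|a p IH] u S x.
  rewrite (sp_nil S) inE; apply: (iffP eqP) => [->|[j ->]]; first by exists 0.
  by rewrite pit_r.
have [E ur S'] := sp_cons S; have pu := sp_nbr S.
rewrite inE; apply: (iffP orP) => [[/eqP -> | /(IH _ S') [j ->]] | [[|j] ->]].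
- by exists 0.
- by exists j.+1; rewrite pitS pu.
- by left.
- by right; apply/(IH _ S'); exists j; rewrite pitS pu.
Qed.

Lemma anc_iff x u : reflect (exists j, x = pit j u) (anc e r x u).
Proof.
apply: (iffP idP).
- case/existsP => n /existsP [q /and4P [Q /eqP L U M]].
  have Sq : sp r q u by rewrite /sp Q L U eqxx.
  have Sp := sp_rev Sq; apply/(mem_sp Sp).
  by rewrite -L revE mem_rev.
- move=> Hx; have [p S] := sp_exists u r.
  have M : x \in u :: p by apply/(mem_sp S).
  have Sq := sp_rev S.
  have lt := sp_size_lt Sq.
  rewrite /anc /onpath; apply/existsP; exists (Ordinal lt); apply/existsP; exists (in_tuple (rev (belast u p))).
  case/and3P: Sq => -> -> -> /=.
  move: (revE u p); case/and3P: S => _ _ /eqP -> ->.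
  by rewrite mem_rev.
Qed.

Lemma anc_pit j u : anc e r (pit j u) u.
Proof. by apply/anc_iff; exists j. Qed.

Lemma anc_refl u : anc e r u u.
Proof. exact: (anc_pit 0). Qed.

Lemma anc_trans x y z : anc e r x y -> anc e r y z -> anc e r x z.
Proof.
move=> /anc_iff [i ->] /anc_iff [j ->]; rewrite pitD; exact: anc_pit.
Qed.

Lemma D0 w : D w = 0 -> w = r.
Proof.
move=> H; have [p [P L S]] := dist_walk econn r w.
by move: S L; rewrite H; case: p P.
Qed.

Lemma D_par w : D (par w) = D w - 1.
Proof.
case: (w =P r) => [->|wr]; first by rewrite par_r dist_refl.
have [p S] := sp_exists w r.
case: p S => [|a p] S; first by case: wr; exact: sp_nil S.
have [_ _ S'] := sp_cons S; rewrite (sp_nbr S).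
rewrite dist_sym // -(sp_size S') dist_sym // -(sp_size S) /=.
by rewrite subn1.
Qed.

Lemma D_pit j u : D (pit j u) = D u - j.
Proof.
elim: j => [|j IH]; first by rewrite subn0.
rewrite /Defs.pit iterS -/(pit j u) D_par IH; lia.
Qed.

Lemma pit_D j u : D u <= j -> pit j u = r.
Proof. by move=> H; apply: D0; rewrite D_pit; apply/eqP; rewrite subn_eq0. Qed.

Lemma par_edge w : w != r -> e w (par w).
Proof.
move=> wr; have [p S] := sp_exists w r.
case: p S => [|a p] S; first by move: wr; rewrite (sp_nil S) eqxx.
by have [E _ _] := sp_cons S; rewrite (sp_nbr S).
Qed.

Variable s : seq V.
Hypothesis dfs : is_dfs e r s.
Notation anc := (anc e r).

Lemma leaf_desc (a b : V) : a != b -> forall x, exists z, anc x z /\ leaf e z.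
Proof.
move=> ab x.
case: (@arg_maxnP V x (fun z => anc x z) D (anc_refl x)) => z Pz Hmax.
exists z; split => //.
have nb : forall w, e z w -> w = par z.
  move=> w E; case: (nbr_par E) => // pw.
  have wr : w != r by apply/eqP => wr; move: E; rewrite -pw wr par_r eirr.
  have Dw : D w = (D z).+1.
    have := D_par w; rewrite pw.
    have : D w != 0 by apply/eqP => /D0 /eqP; rewrite (negbTE wr).
    lia.
  have : anc x w by apply: anc_trans Pz _; rewrite -pw; apply: (anc_pit 1).
  by move/Hmax; rewrite Dw; lia.
have [y yz] : exists y, y != z.
  case: (a =P z) => [az|az]; last by exists a; apply/eqP.
  by exists b; rewrite -az eq_sym.
have [p S] := sp_exists z y.
case: p S => [|c p] S; first by move: yz; rewrite (sp_nil S) eqxx.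
have [E _ _] := sp_cons S.
have cp := nb _ E.
rewrite /leaf /deg; apply/eqP.
have -> : [set w | e z w] = [set par z].
  apply/setP => w; rewrite !inE; apply/idP/eqP => [/nb // | ->].
  by rewrite -cp.
exact: cards1.
Qed.

Lemma dfs_block c : exists a n, index c s = a /\ forall y, anc c y = (a <= index y s < a + n).
Proof.
case: dfs => Us alls _ _ Hb.
case: (Hb c) => /infixP [s1 [s2 Es]] Hh.
exists (size s1), (size (filter (anc c) s)).
have memF y : (y \in filter (anc c) s) = anc c y by rewrite mem_filter alls andbT.
move: Us; rewrite {1}Es cat_uniq => /and3P [_ Dis _].
have notin y : y \in filter (anc c) s -> y \notin s1.
  move=> yF; apply/negP => ys1; move/hasPn: Dis => /(_ y); rewrite mem_cat yF /= => /(_ isT).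
  by rewrite ys1.
split.
- have cF : c \in filter (anc c) s by rewrite memF anc_refl.
  rewrite {1}Es index_cat (negbTE (notin _ cF)) index_cat cF.
  move: Hh cF; case: (filter (anc c) s) => //= h t -> _.
  by rewrite eqxx addn0.
- move=> y; rewrite -memF.
  have -> : index y s = index y (s1 ++ filter (anc c) s ++ s2) by rewrite {1}Es.
  rewrite index_cat.
  case: (boolP (y \in s1)) => ys1.
    have : y \notin filter (anc c) s by apply/negP => /notin; rewrite ys1.
    move=> /negbTE ->; have := index_mem y s1; rewrite ys1 => lt.
    by rewrite leqNgt lt.
  rewrite index_cat; case: (boolP (y \in filter (anc c) s)) => yF.
    have := index_mem y (filter (anc c) s); rewrite yF => H.
    by symmetry; apply/andP; split; [exact: leq_addr | rewrite ltn_add2l].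
  by symmetry; apply/negbTE/negP => /andP [_]; rewrite ltn_add2l ltnNge leq_addr.
Qed.

Lemma block_lt cu cv z1 z2 : ~~ anc cu cv -> index cu s < index cv s ->
  anc cu z1 -> anc cv z2 -> index z1 s < index z2 s.
Proof.
move=> nuv lt A1 A2.
have [a [n [Ea Ha]]] := dfs_block cu.
have [b [m [Eb Hb]]] := dfs_block cv.
move: A1 A2 nuv; rewrite (Ha z1) (Hb z2) (Ha cv) => /andP [h1 h2] /andP [h3 h4] H.
rewrite ltnNge; apply/negP => h5; move/negP: H; apply; apply/andP; split; lia.
Qed.

Hypothesis two : exists a b : V, a != b.

Lemma Lset_nonempty x : Lset e r s x != [::].
Proof.
have [a [b ab]] := two.
have [z [A L]] := leaf_desc ab x.
have zl : z \in leaves e s by rewrite mem_filter L; case: dfs => _ H _ _ _; exact: H.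
have : index z (leaves e s) \in Lset e r s x.
  by rewrite mem_filter mem_iota /= index_mem zl (nth_index r zl) A.
by case: (Lset e r s x).
Qed.

Lemma Lset_mem x j : j \in Lset e r s x -> j < size (leaves e s) /\ anc x (nth r (leaves e s) j).
Proof. by rewrite mem_filter mem_iota /= => /andP [-> ->]. Qed.

Lemma sL_mem x : sL e r s x \in Lset e r s x.
Proof. by move: (Lset_nonempty x); rewrite /sL; case: (Lset e r s x) => //= h t _; rewrite mem_head. Qed.

Lemma tL_mem x : tL e r s x \in Lset e r s x.
Proof. by move: (Lset_nonempty x); rewrite /tL; case: (Lset e r s x) => //= h t _; exact: mem_last. Qed.

Lemma key_lt cu cv x y : ~~ anc cu cv -> index cu s < index cv s ->
  anc cu x -> anc cv y -> tL e r s x < sL e r s y.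
Proof.
move=> nuv lt Ax Ay.
have [j1lt A1] := Lset_mem (tL_mem x).
have [j2lt A2] := Lset_mem (sL_mem y).
set l1 := nth r (leaves e s) (tL e r s x) in A1.
set l2 := nth r (leaves e s) (sL e r s y) in A2.
have Us : uniq s by case: dfs => H _ _ _ _.
have Ul : uniq (leaves e s) by apply: filter_uniq.
have m1 : l1 \in leaves e s by apply: mem_nth.
have m2 : l2 \in leaves e s by apply: mem_nth.
rewrite -(index_uniq r j1lt Ul) -(index_uniq r j2lt Ul) -/l1 -/l2.
move: m1 m2; rewrite !mem_filter => /andP [L1 s1] /andP [L2 s2].
apply: index_filter_lt => //.
apply: (block_lt nuv lt); [exact: anc_trans Ax A1 | exact: anc_trans Ay A2].
Qed.

Lemma anc_pitE w u : anc w u -> w = pit (D u - D w) u /\ D w <= D u.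
Proof.
case/anc_iff => j ->; rewrite D_pit; split; last exact: leq_subr.
case: (leqP j (D u)) => h; first by rewrite subKn.
rewrite pit_D ?(ltnW h) //; symmetry; apply: pit_D; lia.
Qed.

Lemma dist_par w : dist e w (par w) <= 1.
Proof.
case: (w =P r) => [->|wr]; first by rewrite par_r dist_refl.
by apply: dist_edge; apply: par_edge; apply/eqP.
Qed.

Lemma dist_pit j u : dist e u (pit j u) <= j.
Proof.
elim: j => [|j IH]; first by rewrite /Defs.pit /= dist_refl.
have -> : pit j.+1 u = par (pit j u) by [].
apply: leq_trans (dist_tri econn u (pit j u) _) _.
by rewrite -addn1 leq_add // dist_par.
Qed.

Lemma anc_sub i j u : i <= j -> anc (pit j u) (pit i u).
Proof. by move=> h; rewrite -(subnK h) -pitD; apply: anc_pit. Qed.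

Lemma main k u v : 1 <= k -> u != v -> k < dist e u v ->
  ~ adjI' e r k u v \/ exists2 i, i < k & ~ adjI e r s k i u v.
Proof.
move=> k1 uv dk.
have Pr : (fun w => anc w u && anc w v) r.
  have := anc_pit (D u) u; have := anc_pit (D v) v.
  by rewrite !pit_D // => -> ->.
case: (@arg_maxnP V r (fun w => anc w u && anc w v) D Pr) => w /andP [Au Av] Hmax.
have [Eu Lu] := anc_pitE Au; have [Ev Lv] := anc_pitE Av.
set a := D u - D w in Eu; set b := D v - D w in Ev.
have dab : dist e u v <= a + b.
  apply: leq_trans (dist_tri econn u w v) _; apply: leq_add.
    by rewrite [X in dist e u X]Eu; apply: dist_pit.
  by rewrite dist_sym // [X in dist e v X]Ev; apply: dist_pit.
case: (posnP a) => a0.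
  left => [[_ [x [/andP [h1 h2] /andP [h3 h4]]]]].
  move: a0 dab h2 h3; rewrite /a; lia.
case: (posnP b) => b0.
  left => [[_ [x [/andP [h1 h2] /andP [h3 h4]]]]].
  move: b0 dab h1 h4; rewrite /b; lia.
set cu := pit a.-1 u; set cv := pit b.-1 v.
have Dcu : D cu = (D w).+1 by rewrite /cu D_pit /a; lia.
have Dcv : D cv = (D w).+1 by rewrite /cv D_pit /b; lia.
have Acu : anc cu u by apply: anc_pit.
have Acv : anc cv v by apply: anc_pit.
have nuv : ~~ anc cu cv.
  apply/negP => H; have := Hmax cu; rewrite Acu (anc_trans H Acv) Dcu /= => /(_ isT); lia.
have nvu : ~~ anc cv cu.
  apply/negP => H; have := Hmax cv; rewrite Acv (anc_trans H Acu) Dcv /= => /(_ isT); lia.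
have alls : forall x, x \in s by case: dfs => _ H _ _ _.
right.
case: (ltngtP (index cu s) (index cv s)) => [lt|lt|eq].
- exists (k - minn a k); first lia.
  move=> [_ [x [/andP [h1 h2] /andP [h3 h4]]]].
  have := key_lt nuv lt (x := pit (k - 1 - (k - minn a k)) u) (y := pit (k - minn a k) v).
  rewrite !anc_sub; [move=> /(_ isT isT); lia | lia | lia].
- exists (k - minn b k); first lia.
  move=> [_ [x [/andP [h1 h2] /andP [h3 h4]]]].
  have := key_lt nvu lt (x := pit (k - 1 - (k - minn b k)) v) (y := pit (k - minn b k) u).
  rewrite !anc_sub; [move=> /(_ isT isT); lia | lia | lia].
- have : cu = cv by rewrite -(nth_index r (alls cu)) eq nth_index.
  by move=> E; move: nuv; rewrite E anc_refl.
Qed.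
End Rooted.

Theorem lemma9 (V : finType) (e : rel V) (r : V) (s : seq V) (k : nat) :
  is_tree e -> ~~ leaf e r -> is_dfs e r s -> 1 <= k ->
  forall u v : V, u != v -> ~ adjTk e k u v ->
    ~ adjI' e r k u v \/ exists2 i, i < k & ~ adjI e r s k i u v.
Proof.
move=> [esym [eirr [econn acyc]]] _ dfs k1 u v uv nadj.
have dk : k < dist e u v by rewrite ltnNge; apply/negP => h; apply: nadj; split.
have two : exists a b : V, a != b by exists u, v.
exact: (main esym eirr econn acyc dfs two k1 uv dk).
Qed.
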